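(* Let $\preceq$ be an $\omega$-recognizable preorder over $\Sigma$ and $\sim$ its induced equivalence relation. Then every equivalence class of $\sim$ contains a lasso (an ultimately periodic word $\mu(\nu)^\omega$ with $\mu,\nu\in\Sigma^*$, $\nu$ nonempty). Moreover, for every $x\in\Sigma^\omega$ there exists a prefix $\mu\nu$ of $x$ such that $x\sim\mu(\nu)^\omega$.
   Context: A relation on $\Sigma^\omega$ is $\omega$-recognizable if it equals $\bigcup_{k=1}^{\ell}X_k\times Y_k$ with $X_k,Y_k\subseteq\Sigma^\omega$ $\omega$-regular. A preorder is reflexive and transitive; $x\sim y$ iff $x\preceq y$ and $y\preceq x$. *)

(* Defs.v *)
From mathcomp Require Import all_boot.
Set Implicit Arguments. Unset Strict Implicit. Unset Printing Implicit Defensive.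

Definition oword (S : Type) := nat -> S.

Record buchi (S : finType) := Buchi {
  bstate : finType;
  binit : pred bstate;
  btrans : bstate -> S -> bstate -> bool;
  bacc : pred bstate }.

Definition accepts (S : finType) (A : buchi S) (x : oword S) : Prop :=
  exists r : nat -> bstate A,
    [/\ @binit S A (r 0),
        (forall n, @btrans S A (r n) (x n) (r n.+1)) &
        (forall n, exists2 m, n <= m & @bacc S A (r m))].

Definition omega_regular (S : finType) (L : oword S -> Prop) : Prop :=
  exists A : buchi S, forall x, L x <-> accepts A x.

Definition omega_recognizable (S : finType) (R : oword S -> oword S -> Prop) : Prop :=
  exists (l : nat) (X Y : 'I_l -> oword S -> Prop),
    (forall k, omega_regular (X k) /\ omega_regular (Y k)) /\
    (forall x y, R x y <-> exists k, X k x /\ Y k y).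

Definition is_preorder (S : Type) (R : S -> S -> Prop) : Prop :=
  (forall x, R x x) /\ (forall x y z, R x y -> R y z -> R x z).

Definition equivR (S : Type) (R : S -> S -> Prop) (x y : S) : Prop := R x y /\ R y x.

(** [w] is the lasso mu (nu)^omega, with nu nonempty.  (The default of [nth]
    is irrelevant since the index is always in range.) *)
Definition is_lasso (S : Type) (mu nu : seq S) (w : oword S) : Prop :=
  nu <> [::] /\
  forall n, w n = nth (w n) (mu ++ nu)
              (if n < size mu then n else size mu + (n - size mu) %% size nu).

Definition oprefix (S : Type) (u : seq S) (x : oword S) : Prop :=
  forall i, i < size u -> x i = nth (x i) u i.

(* Main.v *)
Require Import Defs.
From mathcomp Require Import all_boot.
Set Implicit Arguments. Unset Strict Implicit.

Lemma modS_case (m d : nat) : 0 < d ->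
  m.+1 %% d = if (m %% d).+1 == d then 0 else (m %% d).+1.
Proof.
move=> d0.
have E : m.+1 = m %/ d * d + (m %% d).+1 by rewrite addnS -divn_eq.
case: eqP => [Hd|Hd].
  by rewrite E Hd -mulSnr modnMl.
rewrite E modnMDl modn_small //.
have := ltn_pmod m d0; rewrite leq_eqVlt => /orP[/eqP//|//].
Qed.

Definition gi (i j n : nat) := if n < i then n else i + (n - i) %% (j - i).

Lemma gi_lt i j n : i < j -> gi i j n < j.
Proof.
move=> ij; rewrite /gi; case: ifP => [h|_]; first exact: ltn_trans h ij.
have : (n - i) %% (j - i) < j - i by rewrite ltn_pmod // subn_gt0.
by rewrite -(ltn_add2l i) subnKC // ltnW.
Qed.

Lemma gi_S i j n : i < j ->
  gi i j n.+1 = if (gi i j n).+1 == j then i else (gi i j n).+1.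
Proof.
move=> ij; rewrite /gi.
have d0 : 0 < j - i by rewrite subn_gt0.
case: (ltnP n i) => ni.
  case: (ltnP n.+1 i) => ni'.
    by rewrite (ltn_eqF (ltn_trans ni' ij)).
  have Ei : n.+1 = i by apply/eqP; rewrite eqn_leq ni ni'.
  by rewrite Ei subnn mod0n addn0 (ltn_eqF ij).
rewrite ltnNge (leq_trans ni (leqnSn n)) /= subSn // modS_case //.
have -> : ((i + (n - i) %% (j - i)).+1 == j) = (((n - i) %% (j - i)).+1 == j - i).
  by rewrite -[in RHS](eqn_add2l i) subnKC ?(ltnW ij) // addnS.
by case: eqP => _; rewrite ?addn0 ?addnS.
Qed.

Lemma gi_hit i j a K : i < j -> i <= a < j -> gi i j (i + K * (j - i) + (a - i)) = a.
Proof.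
move=> ij /andP[ia aj]; rewrite /gi ltnNge -addnA leq_addr /= addKn modnMDl modn_small.
  by rewrite subnKC.
by rewrite ltn_sub2r.
Qed.

Definition lw (S : Type) (x : nat -> S) i j : nat -> S := fun n => x (gi i j n).

Lemma lasso_acc (S : finType) (A : buchi S) x (r : nat -> bstate A) i j a :
  i < j -> binit (r 0) -> (forall n, btrans (r n) (x n) (r n.+1)) ->
  r i = r j -> i <= a < j -> bacc (r a) -> accepts A (lw x i j).
Proof.
move=> ij r0 rt rij aij ra.
exists (fun n => r (gi i j n)); split.
- by rewrite /gi; case: ifP => //; case: i ij {rij aij} => // ij _; rewrite mod0n.
- move=> n; rewrite gi_S //; case: eqP => E; last exact: rt.
  by rewrite rij; have := rt (gi i j n); rewrite E.
- move=> n; exists (i + n * (j - i) + (a - i)); last by rewrite gi_hit.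
  rewrite -addnA (leq_trans _ (leq_addl _ _)) // (leq_trans _ (leq_addr _ _)) //.
  by rewrite leq_pmulr // subn_gt0.
Qed.

Lemma pigeon (T1 T2 : finType) (r1 : nat -> T1) (r2 : nat -> T2) (P1 : pred T1) (P2 : pred T2) :
  (forall n, exists2 m, n <= m & P1 (r1 m)) ->
  (forall n, exists2 m, n <= m & P2 (r2 m)) ->
  exists i j, [/\ i < j, r1 i = r1 j, r2 i = r2 j,
     (exists a, i <= a < j /\ P1 (r1 a)) & (exists b, i <= b < j /\ P2 (r2 b))].
Proof.
move=> H1 H2.
have nA : forall n, {m | n <= m & P1 (r1 m)}.
  move=> n; have [|m /andP[? ?] _] := find_ex_minn (P := fun m => (n <= m) && P1 (r1 m)).
    by have [m ? ?] := H1 n; exists m; apply/andP.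
  by exists m.
have nB : forall n, {m | n <= m & P2 (r2 m)}.
  move=> n; have [|m /andP[? ?] _] := find_ex_minn (P := fun m => (n <= m) && P2 (r2 m)).
    by have [m ? ?] := H2 n; exists m; apply/andP.
  by exists m.
pose p := fix p m := match m with 0 => 0 | m'.+1 => (maxn (sval (nA (p m'))) (sval (nB (p m')))).+1 end.
have pA : forall m, sval (nA (p m)) < p m.+1 by move=> m /=; rewrite ltnS leq_maxl.
have pB : forall m, sval (nB (p m)) < p m.+1 by move=> m /=; rewrite ltnS leq_maxr.
have pS : forall m, p m < p m.+1.
  by move=> m; apply: leq_ltn_trans (pA m); case: (nA (p m)).
have pmono : forall m k, p m.+1 <= p (m.+1 + k).
  move=> m; elim=> [|k IH]; first by rewrite addn0.
  by rewrite addnS (leq_trans IH) // ltnW.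
have pm : forall m m', m < m' -> p m.+1 <= p m'.
  by move=> m m' /subnKC <-; apply: pmono.
have key : forall m m', m < m' -> r1 (p m) = r1 (p m') -> r2 (p m) = r2 (p m') ->
  exists i j, [/\ i < j, r1 i = r1 j, r2 i = r2 j,
     (exists a, i <= a < j /\ P1 (r1 a)) & (exists b, i <= b < j /\ P2 (r2 b))].
  move=> m m' mm E1 E2; exists (p m), (p m'); split => //.
  - exact: leq_trans (pS m) (pm _ _ mm).
  - exists (sval (nA (p m))); case: (nA (p m)) (pA m) => a /= ha Pa aS.
    by rewrite ha (leq_trans aS (pm _ _ mm)).
  - exists (sval (nB (p m))); case: (nB (p m)) (pB m) => a /= ha Pa aS.
    by rewrite ha (leq_trans aS (pm _ _ mm)).
pose N := #|{: T1 * T2}|.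
pose h := fun m : 'I_N.+1 => (r1 (p m), r2 (p m)).
case: (boolP [exists m, exists m', (m != m') && (h m == h m')]).
  case/existsP => m /existsP [m' /andP[ne /eqP E]].
  case: E => E1 E2.
  case: (ltngtP m m') => mm.
  - exact: key mm E1 E2.
  - by apply: key mm (esym E1) (esym E2).
  - by move: ne; rewrite (val_inj mm) eqxx.
move=> H; exfalso.
have hinj : injective h.
  move=> m m' E; apply/eqP; apply/negPn/negP => ne; move/negP: H; apply.
  by apply/existsP; exists m; apply/existsP; exists m'; rewrite ne E eqxx.
by have := @leq_card _ _ h hinj; rewrite card_ord ltnn.
Qed.

Lemma nth_lasso (S : Type) (x : nat -> S) i j d t : i <= j -> t < j ->
  nth d (mkseq x i ++ mkseq (fun s => x (i + s)) (j - i)) t = x t.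
Proof.
move=> ij tj; rewrite nth_cat size_mkseq; case: ltnP => ti; first by rewrite nth_mkseq.
by rewrite nth_mkseq ?subnKC // ltn_sub2r // (leq_ltn_trans ti).
Qed.

Theorem lemma17 (S : finType) (R : oword S -> oword S -> Prop) :
  omega_recognizable R -> is_preorder R ->
  (forall x : oword S, exists (mu nu : seq S) (w : oword S),
      is_lasso mu nu w /\ equivR R x w) /\
  (forall x : oword S, exists (mu nu : seq S) (w : oword S),
      is_lasso mu nu w /\ oprefix (mu ++ nu) x /\ equivR R x w).
Proof.
move=> [l [X [Y [HXY HR]]]] [Rrefl _].
have P2 : forall x : oword S, exists (mu nu : seq S) (w : oword S),
      is_lasso mu nu w /\ oprefix (mu ++ nu) x /\ equivR R x w.
  move=> x; have [k [Xx Yx]] := (HR x x).1 (Rrefl x).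
  have [[A HA] [B HB]] := HXY k.
  have [r1 [i1 t1 a1]] := (HA x).1 Xx.
  have [r2 [i2 t2 a2]] := (HB x).1 Yx.
  have [i [j [ij E1 E2 [a [ha Pa]] [b [hb Pb]]]]] := pigeon a1 a2.
  have AX : X k (lw x i j) by apply/HA; exact: lasso_acc i1 t1 E1 ha Pa.
  have BY : Y k (lw x i j) by apply/HB; exact: lasso_acc i2 t2 E2 hb Pb.
  exists (mkseq x i), (mkseq (fun s => x (i + s)) (j - i)), (lw x i j).
  split; [split|split].
  - move/(congr1 size); rewrite size_mkseq /=; apply/eqP.
    by rewrite -lt0n subn_gt0.
  - move=> n; rewrite !size_mkseq nth_lasso ?(ltnW ij) //.
    exact: gi_lt.
  - move=> t; rewrite size_cat !size_mkseq subnKC ?(ltnW ij) // => tj.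
    by rewrite nth_lasso ?(ltnW ij).
  - by split; apply/HR; exists k.
split => // x; have [mu [nu [w [? [_ ?]]]]] := P2 x.
by exists mu, nu, w.
Qed.
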